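(* Let $n$ be odd and $\alpha>0$ with $\alpha\,bin(n,\tfrac12,i)\le1$ for all $i$. Let $P_e$ be the distribution on $\{0,1\}^{n+1}$ in which coordinate $i\in\{0,\ldots,n\}$ is independently $1$ with probability $S_e(i)$. Then the number of strings $u$ with $P_e(u)\ge e^{-\sqrt n/2}$ is at most $e^{\sqrt n/2}$, and the total probability $\sum_{u:\,P_e(u)<e^{-\sqrt n/2}}P_e(u)$ is at most $e^{\sqrt\alpha(2\pi n)^{1/4}-\sqrt n/4}$. The same holds for the analogous distribution induced by $S_o$.
   Context: $bin(n,p,k)=\binom nk p^k(1-p)^{n-k}$. $S_e(i)=\alpha\,bin(n,\tfrac12,i)$ for even $i$ and $0$ for odd $i$; $S_o(i)=\alpha\,bin(n,\tfrac12,i)$ for odd $i$ and $0$ for even $i$, for $i\in\{0,\ldots,n\}$. *)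

(* Defs.v *)
From HB Require Import structures.
From mathcomp Require Import all_boot all_order all_algebra.
From mathcomp Require Import all_classical all_reals all_analysis.
Set Implicit Arguments. Unset Strict Implicit. Unset Printing Implicit Defensive.
Import Order.TTheory GRing.Theory Num.Theory.
Local Open Scope ring_scope.

Definition bin {R : realType} (n : nat) (p : R) (k : nat) : R :=
  'C(n, k)%:R * p ^+ k * (1 - p) ^+ (n - k).

Definition S_e {R : realType} (alpha : R) (n i : nat) : R :=
  if ~~ odd i then alpha * bin n (1 / 2) i else 0.

Definition S_o {R : realType} (alpha : R) (n i : nat) : R :=
  if odd i then alpha * bin n (1 / 2) i else 0.

Definition prodP {R : realType} (n : nat) (S : nat -> R)
  (u : {ffun 'I_n.+1 -> bool}) : R :=
  \prod_(i < n.+1) (if u i then S i else 1 - S i).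

(* Main.v *)
From Stdlib Require PeanoNat.
Require Import Defs.
From HB Require Import structures.
From mathcomp Require Import all_boot all_order all_algebra.
From mathcomp Require Import all_classical all_reals all_analysis.
From mathcomp Require Import zify ring lra.
Import Order.TTheory GRing.Theory Num.Theory.
Local Open Scope ring_scope.

Lemma sum_pascal (R : realType) n (f : nat -> R) :
  \sum_(i < n.+2) 'C(n.+1, i)%:R * f i = \sum_(i < n.+1) 'C(n, i)%:R * (f i + f i.+1).
Proof.
rewrite big_ord_recl /= bin0.
under eq_bigr do rewrite /bump /= add1n binS natrD mulrDl.
rewrite big_split /=.
under [RHS]eq_bigr do rewrite mulrDr.
rewrite [RHS]big_split /=.
rewrite [X in _ = X + _]big_ord_recl /= bin0.
rewrite [X in _ + (X + _) = _]big_ord_recr /= bin_small // mul0r addr0.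
under [X in _ = _ + X + _]eq_bigr do rewrite /bump /= add1n.
by rewrite addrA.
Qed.

Lemma sumC (R : realType) n : \sum_(i < n.+1) 'C(n, i)%:R = 2 ^+ n :> R.
Proof.
elim: n => [|n IH]; first by rewrite big_ord1 bin0 expr0.
transitivity (\sum_(i < n.+2) 'C(n.+1, i)%:R * (1 : R)); first by apply: eq_bigr => i _; rewrite mulr1.
rewrite (sum_pascal _ n (fun _ => 1 : R)) exprS -IH mulr_sumr; apply: eq_bigr => i _; rewrite mulrC.
by rewrite -[1 + 1]/(2%:R) -mulr_natr.
Qed.

Lemma sumVar (R : realType) n :
  \sum_(i < n.+1) 'C(n, i)%:R * (2 * i%:R - n%:R) ^+ 2 = n%:R * 2 ^+ n :> R.
Proof.
elim: n => [|n IH]; first by rewrite big_ord1 /= bin0 !mul0r subr0 expr2 !mulr0.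
rewrite (sum_pascal _ n (fun j : nat => (2 * j%:R - n.+1%:R) ^+ 2 : R)).
rewrite (eq_bigr (fun i : 'I_n.+1 => 2 * ('C(n, i)%:R * (2 * i%:R - n%:R) ^+ 2) + 2 * 'C(n, i)%:R)); last first.
  by move=> i _; rewrite -!natr1; ring.
rewrite big_split /= -!mulr_sumr IH sumC exprS -natr1; ring.
Qed.

Lemma sym_half (R : realType) (n : nat) (p : bool) (g : nat -> R) :
  odd n -> (forall i, (i <= n)%N -> g (n - i)%N = g i) ->
  \sum_(i < n.+1) (if odd i == p then g i else 0) = (\sum_(i < n.+1) g i) / 2.
Proof.
move=> hn hg.
have E2 : \sum_(i < n.+1) g i = \sum_(i < n.+1) (if odd i == p then g i else 0) +
          \sum_(i < n.+1) (if odd i == ~~ p then g i else 0).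
  rewrite -big_split /=; apply: eq_bigr => i _.
  by case: (odd i); case: (p); rewrite /= ?addr0 ?add0r.
have E1 : \sum_(i < n.+1) (if odd i == p then g i else 0) =
          \sum_(i < n.+1) (if odd i == ~~ p then g i else 0).
  rewrite (reindex_inj rev_ord_inj) /=; apply: eq_bigr => i _.
  have hi : (i <= n)%N by rewrite -ltnS.
  rewrite subSS oddB // hn hg //.
  by case: (odd i); case: (p).
rewrite E2 E1; field; lra.
Qed.

Lemma sum_prod_ffun (R : realType) n (F : 'I_n.+1 -> bool -> R) :
  \sum_(u : {ffun 'I_n.+1 -> bool}) \prod_i F i (u i) = \prod_i (F i true + F i false).
Proof.
rewrite -bigA_distr_bigA; apply: eq_bigr => i _; by rewrite big_bool.
Qed.

Lemma sqrt_prod (R : realType) n (f : 'I_n -> R) : (forall i, 0 <= f i) ->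
  Num.sqrt (\prod_i f i) = \prod_i Num.sqrt (f i).
Proof.
move=> hf.
suff : Num.sqrt (\prod_i f i) = \prod_i Num.sqrt (f i) /\ 0 <= \prod_i f i by case.
elim/big_rec2: _ => [|i y1 y2 _ [<- h]]; first by rewrite sqrtr1.
by rewrite sqrtrM // mulr_ge0.
Qed.

Lemma cs_bound (R : realType) N (E : nat -> bool) (b w : nat -> R) (lam : R) :
  (forall i, 0 <= b i) -> (forall i, 0 < w i) -> 0 < lam ->
  \sum_(i < N) (if E i then Num.sqrt (b i) else 0) <=
  (lam * \sum_(i < N) (if E i then b i * w i else 0) +
   (\sum_(i < N) (if E i then (w i)^-1 else 0)) / lam) / 2.
Proof.
move=> hb hw hl.
rewrite mulr_sumr mulr_suml -big_split /= mulr_suml.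
apply: ler_sum => i _.
case: (E i); last by rewrite mulr0 mul0r addr0 mul0r.
have hwi := hw i.
set s := Num.sqrt (b i).
have hs : b i = s ^+ 2 by rewrite sqr_sqrtr.
rewrite hs.
set t := lam * w i.
have ht : 0 < t by rewrite mulr_gt0.
have -> : lam * (s ^+ 2 * w i) + (w i)^-1 / lam = t * s ^+ 2 + t^-1.
  by rewrite /t invfM; field; apply/andP; split; rewrite gt_eqF.
set v := t^-1.
have htv : t * v = 1 by rewrite /v divff // gt_eqF.
have hv : 0 <= v by rewrite /v invr_ge0 ltW.
have := mulr_ge0 hv (sqr_ge0 (t * s - 1)).
nra.
Qed.

Definition Phi {R : realType} (K x : R) : R :=
  if x <= - K then - (2 * K) - K ^+ 2 / x else if x <= K then x else 2 * K - K ^+ 2 / x.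

Lemma Phi_neg (R : realType) (K x : R) : x <= - K -> Phi K x = - (2 * K) - K ^+ 2 / x.
Proof. by move=> h; rewrite /Phi h. Qed.

Lemma Phi_mid (R : realType) (K x : R) : 0 < K -> - K <= x <= K -> Phi K x = x.
Proof.
move=> hK /andP [h1 h2]; rewrite /Phi h2.
case: ifP => // h3.
have -> : x = - K by lra.
field; lra.
Qed.

Lemma Phi_pos (R : realType) (K x : R) : 0 < K -> K <= x -> Phi K x = 2 * K - K ^+ 2 / x.
Proof.
move=> hK h; rewrite /Phi.
case: ifP => h3; first lra.
case: ifP => // h4.
have -> : x = K by lra.
field; lra.
Qed.

Lemma Phi_bound (R : realType) (K x : R) : 0 < K -> - (2 * K) <= Phi K x <= 2 * K.
Proof.
move=> hK.
case: (lerP x (- K)) => h1.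
  rewrite Phi_neg //.
  have hx : x != 0 by apply/negP => /eqP hx; lra.
  set y := K ^+ 2 / x.
  have hy : y * x = K ^+ 2 by rewrite /y divfK.
  have hy0 : y <= 0 by rewrite /y mulr_ge0_le0 ?sqr_ge0 // invr_le0; lra.
  have h4 : 0 <= (- y) * (- x - K) by rewrite mulr_ge0 //; lra.
  have h5 : - y <= K by rewrite -(ler_pM2r hK); nra.
  apply/andP; split; lra.
case: (lerP x K) => h2.
  by rewrite Phi_mid //; [apply/andP; split; lra | apply/andP; split; lra].
rewrite Phi_pos //; last lra.
have hx : x != 0 by apply/negP => /eqP hx; lra.
set y := K ^+ 2 / x.
have hy : y * x = K ^+ 2 by rewrite /y divfK.
have hy0 : 0 <= y by rewrite /y mulr_ge0 ?sqr_ge0 // invr_ge0; lra.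
have h4 : 0 <= y * (x - K) by rewrite mulr_ge0 //; lra.
have h5 : y <= K by rewrite -(ler_pM2r hK); nra.
apply/andP; split; lra.
Qed.

Lemma tel_out (R : realType) (K x : R) : 0 < K -> (x <= - K \/ K + 1 <= x) ->
  Phi K x - Phi K (x - 1) = K ^+ 2 / (x * (x - 1)).
Proof.
move=> hK [h|h].
  rewrite Phi_neg // Phi_neg; last lra.
  field; apply/andP; split; apply/negP => /eqP; lra.
rewrite Phi_pos //; last lra.
rewrite Phi_pos //; last lra.
field; apply/andP; split; apply/negP => /eqP; lra.
Qed.

Lemma tel_mid (R : realType) (K x : R) : 0 < K -> 1 - K <= x -> x <= K ->
  Phi K x - Phi K (x - 1) = 1.
Proof.
move=> hK h1 h2.
rewrite Phi_mid //; last by apply/andP; split; lra.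
rewrite Phi_mid //; last by apply/andP; split; lra.
ring.
Qed.

Lemma ineq_c (R : realType) (K x : R) : 0 < K -> (x <= - K \/ K + 1 <= x) ->
  K ^+ 2 / ((x - 1 / 2) ^+ 2) <= K ^+ 2 / (x * (x - 1)).
Proof.
move=> hK h.
have hp : 0 < x * (x - 1) by case: h => h; nra.
apply: ler_wpM2l; first by rewrite sqr_ge0.
rewrite lef_pV2 ?posrE //; first nra.
nra.
Qed.

Definition bb {R : realType} n i : R := 'C(n, i)%:R / 2 ^+ n.

Lemma bb_ge0 (R : realType) n i : 0 <= bb n i :> R.
Proof. by rewrite /bb divr_ge0 // exprn_ge0. Qed.

Lemma core (R : realType) n (p : bool) : odd n ->
  \sum_(i < n.+1) (if odd i == p then Num.sqrt (bb n i) else 0)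
    <= Num.sqrt (Num.sqrt (2 * pi * n%:R)) :> R.
Proof.
move=> hn.
set m := n./2.
have hnm : n = (m.*2).+1 by rewrite -[in LHS](odd_double_half n) hn.
set s := Nat.sqrt n.
have [h1 h2] := PeanoNat.Nat.sqrt_spec' n.
have hs1 : (s * s <= n)%N by rewrite /s; lia.
have hs2 : (n < s.+1 * s.+1)%N by rewrite /s; lia.
have hs0 : (1 <= s)%N by nia.
have hs3 : (n <= 4 * (s * s))%N by nia.
set K : R := s%:R.
have hK : 1 <= K by rewrite /K ler1n.
have hK0 : 0 < K by lra.
have hKn : K ^+ 2 <= n%:R by rewrite /K -natrX ler_nat -mulnn.
have hnK : n%:R <= 4 * K ^+ 2 by rewrite /K -natrX -(natrM R 4) ler_nat -mulnn.
have hnR : n%:R = 2 * m%:R + 1 :> R by rewrite hnm -addn1 natrD -muln2 natrM; ring.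
pose c (i : nat) : R := i%:R - n%:R / 2.
pose cond (i : nat) := ((i + s <= m) || (m.+1 + s <= i))%N.
pose w (i : nat) : R := if cond i then c i ^+ 2 / K ^+ 2 else 1.
pose u (k : nat) : R := Phi K (k%:R - m%:R - 1).
have c_big : forall i, cond i -> 9 / 4 <= c i ^+ 2.
  move=> i; rewrite /cond => /orP [hi|hi].
    have hi' : i%:R + 1 <= m%:R :> R by rewrite natr1 ler_nat; nia.
    have hy : c i <= - (3 / 2) by rewrite /c hnR; lra.
    move: (c i) hy => y hy; clear -hy; nra.
  have hi' : m%:R + 2 <= i%:R :> R by rewrite -[2]/(2%:R) -natrD ler_nat; nia.
  have hy : 3 / 2 <= c i by rewrite /c hnR; lra.
  move: (c i) hy => y hy; clear -hy; nra.
have w_pos : forall i, 0 < w i.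
  move=> i; rewrite /w; case: ifP => // hc.
  have := c_big i hc; move=> h.
  apply: divr_gt0; [lra | exact: exprn_gt0].
have w_le : forall i, w i <= 1 + c i ^+ 2 / K ^+ 2.
  move=> i; rewrite /w; case: ifP => _.
    lra.
  have : 0 <= c i ^+ 2 / K ^+ 2 by rewrite divr_ge0 // ?sqr_ge0 // exprn_ge0 // ltW.
  lra.
have c_sym : forall i, (i <= n)%N -> c (n - i)%N ^+ 2 = c i ^+ 2.
  by move=> i hi; rewrite /c natrB //; field.
have w_sym : forall i, (i <= n)%N -> w (n - i)%N = w i.
  move=> i hi; rewrite /w c_sym //.
  have -> : cond (n - i)%N = cond i.
    rewrite /cond.
    have -> : ((n - i + s <= m) = (m.+1 + s <= i))%N by apply/idP/idP; nia.
    have -> : ((m.+1 + s <= n - i) = (i + s <= m))%N by apply/idP/idP; nia.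
    by rewrite orbC.
  by [].
have inv_w : forall i, (w i)^-1 <= u i.+1 - u i.
  move=> i.
  have -> : u i.+1 = Phi K (i%:R - m%:R) by rewrite /u -natr1; congr Phi; ring.
  have -> : u i = Phi K ((i%:R - m%:R) - 1) by [].
  have hc : c i = (i%:R - m%:R) - 1 / 2 by rewrite /c hnR; field.
  rewrite /w; case: ifP => hcond.
    have hx : (i%:R - m%:R <= - K \/ K + 1 <= i%:R - m%:R).
      move: hcond; rewrite /cond => /orP [hi|hi].
        by left; move: hi; rewrite -(ler_nat R) natrD -/K => hi; lra.
      by right; move: hi; rewrite -(ler_nat R) !natrD -/K => hi; lra.
    rewrite tel_out // invf_div hc.
    exact: ineq_c.
  move: hcond; rewrite /cond => /negbT; rewrite negb_or => /andP [hi1 hi2].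
  rewrite -ltnNge in hi1; rewrite -ltnNge in hi2.
  have hi1' : (m.+1 <= i + s)%N by [].
  have hi2' : (i <= m + s)%N by nia.
  move: hi1' hi2'; rewrite -!(ler_nat R) !natrD -natr1 -/K => hi1' hi2'.
  rewrite tel_mid //; [by rewrite invr1 | lra | lra].
have B_le : \sum_(i < n.+1) (w i)^-1 <= 4 * K.
  apply: (le_trans (y := \sum_(i < n.+1) (u i.+1 - u i))).
    by apply: ler_sum => i _; exact: inv_w.
  rewrite -(big_mkord xpredT (fun i => u i.+1 - u i)) telescope_sumr //.
  have := @Phi_bound R K (n.+1%:R - m%:R - 1) hK0.
  have := @Phi_bound R K (0%:R - m%:R - 1) hK0.
  rewrite /u; lra.
have BE : \sum_(i < n.+1) (if odd i == p then (w i)^-1 else 0) <= 2 * K.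
  rewrite (@sym_half R n p (fun i => (w i)^-1) hn); last by move=> i hi; rewrite w_sym.
  lra.
have hK' : K != 0 by rewrite gt_eqF.
have h2n : (2 : R) ^+ n != 0 by rewrite expf_neq0 // pnatr_eq0.
have AE : \sum_(i < n.+1) (if odd i == p then bb n i * w i else 0)
     <= (1 + n%:R / (4 * K ^+ 2)) / 2.
  apply: (le_trans (y := \sum_(i < n.+1) (if odd i == p then bb n i * (1 + c i ^+ 2 / K ^+ 2) else 0))).
    apply: ler_sum => i _; case: ifP => // _; apply: ler_wpM2l; [exact: bb_ge0 | exact: w_le].
  rewrite (@sym_half R n p (fun i => bb n i * (1 + c i ^+ 2 / K ^+ 2)) hn); last first.
    by move=> i hi; rewrite c_sym // /bb bin_sub.
  rewrite (eq_bigr (fun i : 'I_n.+1 => ('C(n, i)%:R + 'C(n, i)%:R * (2 * i%:R - n%:R) ^+ 2 / (4 * K ^+ 2)) / 2 ^+ n)); last first.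
    by move=> i _; rewrite /bb /c; field; rewrite h2n hK'.
  rewrite -mulr_suml big_split /= -mulr_suml sumC sumVar.
  rewrite le_eqVlt; apply/orP; left; apply/eqP; field.
  by rewrite h2n hK'.
have hpi : (2 : R) <= pi := pi_ge2 R.
have hn1 : 1 <= n%:R :> R by rewrite ler1n hnm.
have h2pn : 0 < 2 * pi * n%:R :> R by apply: mulr_gt0; [apply: mulr_gt0|]; lra.
set Z := Num.sqrt (Num.sqrt (2 * pi * n%:R)).
have hZ0 : 0 < Z by rewrite /Z !sqrtr_gt0.
have hZ2 : Z ^+ 2 = Num.sqrt (2 * pi * n%:R) by rewrite sqr_sqrtr // sqrtr_ge0.
set A0 := (1 + n%:R / (4 * K ^+ 2)) / 2.
have hA0 : 0 < A0.
  rewrite /A0; have : 0 <= n%:R / (4 * K ^+ 2) by rewrite divr_ge0 // mulr_ge0 // ?sqr_ge0.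
  lra.
set Q := K + n%:R / (4 * K).
have hQ : A0 * (2 * K) = Q by rewrite /A0 /Q; field.
set t := n%:R / (4 * K).
have ht0 : 0 <= t by rewrite /t divr_ge0 // mulr_ge0 //; lra.
have htK : t <= K by rewrite /t ler_pdivrMr; [nra | lra].
have ht : t * K = n%:R / 4 by rewrite /t; field.
have hQ0 : 0 <= Q by rewrite /Q -/t; lra.
have hQ2 : Q ^+ 2 <= 2 * pi * n%:R.
  have htt : t * t <= t * K by apply: ler_wpM2l.
  have : Q ^+ 2 <= 4 * n%:R by rewrite /Q -/t expr2; nra.
  nra.
have hQZ : Q <= Z ^+ 2.
  by rewrite hZ2 -(ger0_norm hQ0) -sqrtr_sqr ler_sqrt // ltW.
have hlam : 0 < Z / A0 by rewrite divr_gt0.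
apply: le_trans (@cs_bound R n.+1 (fun i => odd i == p) (bb n) w (Z / A0) (@bb_ge0 R n) w_pos hlam) _.
have e1 : Z / A0 * \sum_(i < n.+1) (if odd i == p then bb n i * w i else 0) <= Z.
  apply: (le_trans (y := Z / A0 * A0)); first by apply: ler_wpM2l; [exact: ltW | exact: AE].
  by rewrite divfK // gt_eqF.
have e2 : (\sum_(i < n.+1) (if odd i == p then (w i)^-1 else 0)) / (Z / A0) <= Z.
  rewrite ler_pdivrMr //.
  apply: (le_trans BE).
  rewrite mulrA -expr2 hZ2 ler_pdivlMr // -hZ2 mulrC hQ; exact: hQZ.
lra.
Qed.

Lemma bin_half (R : realType) n i : bin n (1 / 2) i = bb n i :> R.
Proof.
rewrite /bin /bb.
have -> : 1 - 1 / 2 = 1 / 2 :> R by field.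
case: (leqP i n) => hi.
  by rewrite -mulrA -exprD subnKC // expr_div_n expr1n mul1r.
by rewrite bin_small // !mul0r.
Qed.

Theorem lemma5 (R : realType) (n : nat) (alpha : R)
  (hn : odd n) (halpha : 0 < alpha)
  (hle : forall i : nat, (i <= n)%N -> alpha * bin n (1 / 2) i <= 1) :
  forall S : nat -> R, (S = S_e alpha n \/ S = S_o alpha n) ->
    (#|[set u : {ffun 'I_n.+1 -> bool} |
         expR (- (Num.sqrt (n%:R : R) / 2)) <= prodP S u]|%:R
       <= expR (Num.sqrt (n%:R : R) / 2))
    /\
    (\sum_(u : {ffun 'I_n.+1 -> bool} |
           prodP S u < expR (- (Num.sqrt (n%:R : R) / 2))) prodP S u
       <= expR (Num.sqrt alpha * Num.sqrt (Num.sqrt (2 * (pi : R) * n%:R))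
                - Num.sqrt (n%:R : R) / 4)).
Proof.
move=> S hS.
have [p hSp] : exists p : bool, forall i, S i = if odd i == p then alpha * bb n i else 0.
  case: hS => ->; [exists false | exists true] => i; rewrite /S_e /S_o bin_half.
    by rewrite eqbF_neg.
  by rewrite eqb_id.
have hS01 : forall i : 'I_n.+1, 0 <= S i <= 1.
  move=> i; have hi : (i <= n)%N by rewrite -ltnS.
  rewrite hSp; case: ifP => _; last by apply/andP; split; lra.
  apply/andP; split; first by rewrite mulr_ge0 ?bb_ge0 // ltW.
  by rewrite -bin_half hle.
clear hS.
set a := Num.sqrt (n%:R : R).
set P := prodP S.
have hP0 : forall u, 0 <= P u.
  move=> u; rewrite /P /prodP; apply: prodr_ge0 => i _.
  by have := hS01 i; case: (u i) => /andP [h1 h2]; lra.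
have hP1 : \sum_u P u = 1.
  have := sum_prod_ffun R n (fun i b => if b then S i else 1 - S i); rewrite /= => ->.
  by apply: big1 => i _; ring.
set t := expR (- (a / 2)).
have ht0 : 0 < t by rewrite expR_gt0.
split.
  set A := [set u | _].
  have hA : #|A|%:R * t <= 1.
    rewrite mulrC mulr_natr -sumr_const.
    apply: (le_trans (y := \sum_(u in A) P u)).
      by apply: ler_sum => u; rewrite inE.
    rewrite -hP1 [X in _ <= X](bigID (fun u => u \in A)) /= lerDl.
    by apply: sumr_ge0 => u _; exact: hP0.
  have : #|A|%:R <= 1 / t by rewrite ler_pdivlMr.
  by rewrite /t expRN div1r invrK.
set e := expR (- (a / 4)).
have he0 : 0 < e by rewrite expR_gt0.
have he : t = e * e by rewrite /t /e -expRD; congr expR; field.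
apply: (le_trans (y := \sum_(u | P u < t) e * Num.sqrt (P u))).
  apply: ler_sum => u hu.
  have hs : Num.sqrt (P u) <= e.
    have : Num.sqrt (P u) <= Num.sqrt (e ^+ 2) by rewrite ler_sqrt ?sqr_ge0 // expr2 -he ltW.
    by rewrite sqrtr_sqr ger0_norm // ltW.
  rewrite -{1}(sqr_sqrtr (hP0 u)) expr2 ler_wpM2r // sqrtr_ge0.
apply: (le_trans (y := \sum_u e * Num.sqrt (P u))).
  rewrite [X in _ <= X](bigID (fun u => P u < t)) /= lerDl.
  by apply: sumr_ge0 => u _; rewrite mulr_ge0 ?sqrtr_ge0 // ltW.
rewrite -mulr_sumr.
have -> : \sum_u Num.sqrt (P u) = \prod_(i < n.+1) (Num.sqrt (S i) + Num.sqrt (1 - S i)).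
  transitivity (\sum_(u : {ffun 'I_n.+1 -> bool}) \prod_(i < n.+1) (fun i b => if b then Num.sqrt (S i) else Num.sqrt (1 - S i)) i (u i)).
    apply: eq_bigr => u _; rewrite /P /prodP sqrt_prod; last first.
      by move=> i; have := hS01 i; case: (u i) => /andP [h1 h2]; lra.
    by apply: eq_bigr => i _ /=; case: (u i).
  exact: (sum_prod_ffun R n (fun (i : 'I_n.+1) (b : bool) => if b then Num.sqrt (S i) else Num.sqrt (1 - S i))).
apply: (le_trans (y := e * expR (\sum_(i < n.+1) Num.sqrt (S i)))).
  apply: ler_wpM2l; first exact: ltW.
  rewrite expR_sum; apply: ler_prod => i _.
  apply/andP; split; first by rewrite addr_ge0 ?sqrtr_ge0.
  have := hS01 i => /andP [h1 h2].
  have : Num.sqrt (1 - S i) <= 1 by rewrite -[X in _ <= X]sqrtr1 ler_sqrt //; lra.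
  have := expR_ge1Dx (Num.sqrt (S i)).
  lra.
have -> : \sum_(i < n.+1) Num.sqrt (S i) =
    Num.sqrt alpha * \sum_(i < n.+1) (if odd i == p then Num.sqrt (bb n i) else 0).
  rewrite mulr_sumr; apply: eq_bigr => i _; rewrite hSp; case: ifP => _.
    by rewrite sqrtrM // ltW.
  by rewrite sqrtr0 mulr0.
rewrite /e -expRD ler_expR.
have := core R n p hn.
have hsa : 0 <= Num.sqrt alpha by rewrite sqrtr_ge0.
move=> hc.
have := ler_wpM2l hsa hc.
lra.
Qed.
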